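(* Let $f_1,\dots,f_n$ be nondecreasing linear functions at least one of which is constant, let $\beta_{\min}=\min\{\beta(f_i)\mid\alpha(f_i)=0\}$, and let $\sigma$ be a locally optimal permutation. Let $q_\sigma=\max\{q\in[n]\mid\alpha(f_{\sigma(q)})=0\}$; note $f^\sigma$ is a constant function, identified with its value. Then: (i) $f^\sigma\le\beta_{\min}$; (ii) $f_{\sigma(q_\sigma)}$ is the constant function with value $\beta_{\min}$; (iii) $\theta(f_{\sigma(i)})\in[\theta(f^\sigma)-\pi,\theta(\beta_{\min})]_{2\pi}\cup\{\bot\}$ for every $i\in[q_\sigma]$; (iv) $\theta(f_{\sigma(i)})\in[\theta(\beta_{\min}),\theta(f^\sigma)+\pi]\cup\{\bot\}$ for every $i$ with $q_\sigma\le i\le n$.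
   Context: A linear function is $f(x)=ax+b$; $\alpha(f)=a$, $\beta(f)=b$; nondecreasing means $a\ge0$, constant means $a=0$. $\vec f=(b,1-a)^\top$, $\theta(f)\in[0,2\pi)$ its polar angle, $\theta(f)=\bot$ if $\vec f=0$; for a real $c$, $\theta(c)$ is the polar angle of $(c,1)^\top$. $[\theta_1,\theta_2]_{2\pi}=\{\theta\in[\lambda_1,\lambda_2]\mid\lambda_1-\theta_1,\lambda_2-\theta_2\in2\pi\mathbb{Z},\ \lambda_2-\lambda_1\in[0,2\pi)\}$; $[\cdot,\cdot]$ without subscript is an ordinary real interval. $f^\sigma=f_{\sigma(n)}\circ\cdots\circ f_{\sigma(1)}$. For $1\le\ell\le m<r\le n$, $\sigma_{\ell,m,r}$ swaps the adjacent blocks $(\sigma(\ell),\dots,\sigma(m))$ and $(\sigma(m+1),\dots,\sigma(r))$ of $\sigma$; $\sigma$ is locally optimal if $f^\sigma\le f^{\sigma_{\ell,m,r}}$ for all such $\ell,m,r$. *)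

(* Defs.v *)
From Stdlib Require Import Reals Lra Lia ZArith.
Open Scope R_scope.

Definition lin := (R * R)%type.
Definition alpha (f : lin) : R := fst f.
Definition beta (f : lin) : R := snd f.
Definition ev (f : lin) (x : R) : R := alpha f * x + beta f.

Definition polar_angle (x y : R) : R :=
  let r := sqrt (x * x + y * y) in
  if Rle_dec 0 y then acos (x / r) else 2 * PI - acos (x / r).

(* theta f : polar angle of vec f = (b, 1 - a); None stands for bottom
   (vec f = 0). *)
Definition theta (f : lin) : option R :=
  if Req_EM_T (beta f) 0 then
    if Req_EM_T (1 - alpha f) 0 then None
    else Some (polar_angle (beta f) (1 - alpha f))
  else Some (polar_angle (beta f) (1 - alpha f)).

Definition theta_c (c : R) : R := polar_angle c 1.

Definition in_or_bot (o : option R) (S : R -> Prop) : Prop :=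
  match o with None => True | Some t => S t end.

Definition cyc_interval (t1 t2 : R) (t : R) : Prop :=
  exists l1 l2 : R, l1 <= t <= l2 /\
    (exists k : Z, l1 - t1 = 2 * PI * IZR k) /\
    (exists k : Z, l2 - t2 = 2 * PI * IZR k) /\
    0 <= l2 - l1 < 2 * PI.

Definition interval (t1 t2 : R) (t : R) : Prop := t1 <= t <= t2.

(* Functions are indexed 1..n by F : nat -> lin; a permutation of [n]
   is sigma : nat -> nat, a bijection of {1,...,n}. *)
Definition is_perm (n : nat) (sigma : nat -> nat) : Prop :=
  (forall i, (1 <= i <= n)%nat -> (1 <= sigma i <= n)%nat) /\
  (forall i j, (1 <= i <= n)%nat -> (1 <= j <= n)%nat ->
     sigma i = sigma j -> i = j).

Fixpoint comp (F : nat -> lin) (sigma : nat -> nat) (k : nat) (x : R) : R :=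
  match k with
  | O => x
  | S k' => ev (F (sigma (S k'))) (comp F sigma k' x)
  end.

Definition fsig (n : nat) (F : nat -> lin) (sigma : nat -> nat) : R -> R :=
  comp F sigma n.

(* sigma_{l,m,r}: swap adjacent blocks (sigma(l..m)) and (sigma(m+1..r)). *)
Definition swap_blocks (sigma : nat -> nat) (l m r : nat) : nat -> nat :=
  fun i =>
    if (i <? l)%nat then sigma i
    else if (r <? i)%nat then sigma i
    else if (i <? l + (r - m))%nat then sigma (i + (m + 1 - l))%nat
    else sigma (i - (r - m))%nat.

Definition fle (f g : R -> R) : Prop := forall x, f x <= g x.

Definition locally_optimal (n : nat) (F : nat -> lin) (sigma : nat -> nat) : Prop :=
  forall l m r : nat, (1 <= l)%nat -> (l <= m)%nat -> (m < r)%nat -> (r <= n)%nat ->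
    fle (fsig n F sigma) (fsig n F (swap_blocks sigma l m r)).

(* Main.v *)
Require Import Defs.
From Stdlib Require Import Reals Lra Lia List FinFun.
Require Import Defs.
Open Scope R_scope.

Lemma pa_props x y : ~(x = 0 /\ y = 0) ->
  0 < sqrt (x*x+y*y) /\ 0 <= polar_angle x y < 2*PI /\
  x = sqrt (x*x+y*y) * cos (polar_angle x y) /\
  y = sqrt (x*x+y*y) * sin (polar_angle x y).
Proof.
  intros Hnz.
  assert (Hpos : 0 < x*x+y*y).
  { destruct (Req_dec x 0); destruct (Req_dec y 0); try tauto; nra. }
  set (r := sqrt (x*x+y*y)).
  assert (Hr : 0 < r) by (apply sqrt_lt_R0; lra).
  assert (Hrr : r * r = x*x+y*y) by (apply sqrt_sqrt; lra).
  set (u := x / r).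
  assert (Hxu : x = r * u) by (unfold u; field; lra).
  assert (Hu : -1 <= u <= 1).
  { assert (Huu : u*u <= 1).
    { assert (r*r*(u*u) <= r*r*1) by nra.
      apply Rmult_le_reg_l with (r*r); nra. }
    split; nra. }
  assert (Hs : sqrt (1 - u²) = Rabs y / r).
  { assert (E : 1 - u² = (Rabs y / r) * (Rabs y / r)).
    { unfold Rsqr.
      replace (Rabs y / r * (Rabs y / r)) with ((Rabs y * Rabs y) / (r*r)) by (field; lra).
      rewrite <- Rabs_mult. rewrite (Rabs_pos_eq (y*y)) by nra.
      unfold u. apply Rmult_eq_reg_r with (r*r); [|nra].
      field_simplify; [|lra|lra]. nra. }
    rewrite E. apply sqrt_square. unfold Rdiv; apply Rmult_le_pos; [apply Rabs_pos|apply Rlt_le, Rinv_0_lt_compat; lra]. }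
  pose proof (acos_bound u) as HA.
  pose proof (cos_acos u Hu) as HC.
  pose proof (sin_acos u Hu) as HS.
  unfold polar_angle. fold r. fold u.
  destruct (Rle_dec 0 y) as [Hy|Hy].
  - rewrite Rabs_pos_eq in Hs by lra.
    split; [lra|]. split; [pose proof PI_RGT_0; lra|]. split.
    + rewrite HC. lra.
    + rewrite HS, Hs. field. lra.
  - rewrite Rabs_left in Hs by lra.
    assert (HA0 : 0 < acos u).
    { destruct (Req_dec (acos u) 0) as [E|E]; [|lra].
      rewrite E, cos_0 in HC. subst u. exfalso.
      assert (x = r) by (rewrite Hxu, <- HC; ring). nra. }
    split; [lra|]. split; [lra|].
    rewrite cos_minus, sin_minus, cos_2PI, sin_2PI. split.
    + rewrite HC. lra.
    + rewrite HS, Hs. field. lra.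
Qed.

Lemma sin_sign x y p : ~(x = 0 /\ y = 0) ->
  exists K, 0 < K /\ sin (polar_angle x y - theta_c p) * K = p*y - x.
Proof.
  intros H. destruct (pa_props x y H) as [Hr [_ [Hx Hy]]].
  assert (H1 : ~(p = 0 /\ 1 = 0)) by lra.
  destruct (pa_props p 1 H1) as [Hs [_ [Hp H1']]].
  exists (sqrt (x*x+y*y) * sqrt (p*p+1*1)). split; [nra|].
  unfold theta_c. rewrite sin_minus.
  set (R1 := sqrt (x*x+y*y)) in *. set (R2 := sqrt (p*p+1*1)) in *.
  set (ph := polar_angle x y) in *. set (t := polar_angle p 1) in *.
  replace (p*y - x) with ((R2 * cos t) * (R1 * sin ph) - (R1 * cos ph) * (R2 * sin t))
    by (rewrite <- Hx, <- Hy, <- Hp, <- H1'; ring).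
  ring.
Qed.

Lemma pa_range x y : ~(x = 0 /\ y = 0) -> 0 <= polar_angle x y < 2*PI.
Proof. intros H. apply (pa_props x y H). Qed.

Lemma thc_range p : 0 < theta_c p < PI.
Proof.
  assert (H1 : ~(p = 0 /\ 1 = 0)) by lra.
  destruct (pa_props p 1 H1) as [Hs [[H0 H2] [_ H']]].
  unfold theta_c.
  assert (0 < sin (polar_angle p 1)) by nra.
  destruct (Req_dec (polar_angle p 1) 0) as [E|E].
  { rewrite E, sin_0 in H. lra. }
  destruct (Rlt_le_dec (polar_angle p 1) PI) as [L|L]; [lra|].
  destruct (Req_dec (polar_angle p 1) PI) as [E2|E2].
  { rewrite E2, sin_PI in H. lra. }
  pose proof (sin_lt_0 (polar_angle p 1)). lra.
Qed.

Lemma sin_nonneg_range d : -PI < d < 2*PI -> 0 <= sin d -> 0 <= d <= PI.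
Proof.
  intros [H1 H2] H.
  destruct (Rlt_le_dec d 0). { pose proof (sin_lt_0_var d); lra. }
  destruct (Rle_lt_dec d PI). lra. pose proof (sin_lt_0 d); lra.
Qed.

Lemma sin_nonpos_range d : -PI < d < 2*PI -> sin d <= 0 -> d <= 0 \/ PI <= d.
Proof.
  intros [H1 H2] H.
  destruct (Rle_lt_dec d 0). lra.
  destruct (Rle_lt_dec PI d). lra. pose proof (sin_gt_0 d); lra.
Qed.

Lemma thc_order c b : c <= b -> theta_c b <= theta_c c < theta_c b + PI.
Proof.
  intros H.
  destruct (sin_sign b 1 c) as [K [HK E]]; [lra|].
  pose proof (thc_range b); pose proof (thc_range c).
  assert (sin (theta_c b - theta_c c) <= 0).
  { unfold theta_c at 1. nra. }
  destruct (sin_nonpos_range (theta_c b - theta_c c)); lra.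
Qed.

Lemma ang_iv a b c bm : ~(b = 0 /\ 1 - a = 0) -> c <= bm ->
  (a*c + b <= c \/ a*bm + b <= bm) ->
  interval (theta_c bm) (theta_c c + PI) (polar_angle b (1 - a)).
Proof.
  intros Hnz Hc Hor. unfold interval.
  pose proof (thc_order _ _ Hc). pose proof (pa_range _ _ Hnz).
  pose proof (thc_range c); pose proof (thc_range bm).
  destruct Hor as [Ho|Ho].
  - destruct (sin_sign b (1-a) c Hnz) as [K [HK E]].
    assert (0 <= sin (polar_angle b (1-a) - theta_c c)) by nra.
    pose proof (sin_nonneg_range (polar_angle b (1-a) - theta_c c)). lra.
  - destruct (sin_sign b (1-a) bm Hnz) as [K [HK E]].
    assert (0 <= sin (polar_angle b (1-a) - theta_c bm)) by nra.
    pose proof (sin_nonneg_range (polar_angle b (1-a) - theta_c bm)). lra.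
Qed.

Lemma ang_iii a b c bm : ~(b = 0 /\ 1 - a = 0) -> c <= bm ->
  c <= a*c + b -> bm <= a*bm + b ->
  cyc_interval (theta_c c - PI) (theta_c bm) (polar_angle b (1 - a)).
Proof.
  intros Hnz Hc H1 H2.
  pose proof (thc_order _ _ Hc). pose proof (pa_range _ _ Hnz).
  pose proof (thc_range c); pose proof (thc_range bm).
  set (phi := polar_angle b (1-a)) in *.
  destruct (sin_sign b (1-a) c Hnz) as [K [HK E]].
  destruct (sin_sign b (1-a) bm Hnz) as [K' [HK' E']].
  fold phi in E, E'.
  assert (sin (phi - theta_c c) <= 0) by nra.
  assert (sin (phi - theta_c bm) <= 0) by nra.
  pose proof (sin_nonpos_range (phi - theta_c c)).
  pose proof (sin_nonpos_range (phi - theta_c bm)).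
  assert (PI > 0) by apply PI_RGT_0.
  destruct (Rle_lt_dec phi (theta_c bm)).
  - exists (theta_c c - PI), (theta_c bm).
    split; [split; lra|]. split; [exists 0%Z; simpl; ring|].
    split; [exists 0%Z; simpl; ring|]. lra.
  - exists (theta_c c + PI), (theta_c bm + 2*PI).
    split; [split; lra|]. split; [exists 1%Z; simpl; ring|].
    split; [exists 1%Z; simpl; ring|]. lra.
Qed.

Fixpoint segc (F : nat -> lin) (s : nat -> nat) (a k : nat) (x : R) : R :=
  match k with
  | O => x
  | S k' => ev (F (s (a + S k')%nat)) (segc F s a k' x)
  end.

Lemma comp_segc F s k x : comp F s k x = segc F s 0 k x.
Proof. induction k; simpl; [reflexivity| rewrite IHk; reflexivity]. Qed.

Lemma segc_split F s a k m x :
  segc F s a (k + m) x = segc F s (a + k) m (segc F s a k x).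
Proof.
  induction m; simpl.
  - rewrite Nat.add_0_r. reflexivity.
  - rewrite Nat.add_succ_r. simpl. rewrite IHm.
    replace (a + S (k + m))%nat with (a + k + S m)%nat by lia. reflexivity.
Qed.

Lemma segc_ext F s t a b k x :
  (forall i, (1 <= i <= k)%nat -> s (a + i)%nat = t (b + i)%nat) ->
  segc F s a k x = segc F t b k x.
Proof.
  induction k; intros H; simpl; [reflexivity|].
  rewrite IHk by (intros; apply H; lia). rewrite H by lia. reflexivity.
Qed.

Definition seg F s u v x := segc F s u (v - u) x.

Lemma seg_split F s u v w x : (u <= v <= w)%nat ->
  seg F s u w x = seg F s v w (seg F s u v x).
Proof.
  intros H. unfold seg.
  replace (w - u)%nat with ((v - u) + (w - v))%nat by lia.
  rewrite segc_split. replace (u + (v - u))%nat with v by lia. reflexivity.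
Qed.

Lemma seg_nil F s u x : seg F s u u x = x.
Proof. unfold seg. rewrite Nat.sub_diag. reflexivity. Qed.

Lemma seg_one F s u x : seg F s u (S u) x = ev (F (s (S u))) x.
Proof. unfold seg. replace (S u - u)%nat with 1%nat by lia. simpl.
  rewrite Nat.add_1_r. reflexivity. Qed.

Lemma seg_kill F s u p v x : (u < p <= v)%nat -> alpha (F (s p)) = 0 ->
  seg F s u v x = seg F s p v (beta (F (s p))).
Proof.
  intros H Ha. rewrite (seg_split F s u p v) by lia. f_equal.
  destruct p as [|p]; [lia|].
  rewrite (seg_split F s u p (S p)) by lia. rewrite seg_one. unfold ev. rewrite Ha. ring.
Qed.

Lemma segc_strict F s a k x y :
  (forall i, (1 <= i <= k)%nat -> 0 < alpha (F (s (a + i)%nat))) ->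
  x < y -> segc F s a k x < segc F s a k y.
Proof.
  induction k; intros H Hxy; simpl; [assumption|].
  assert (Hk := IHk (fun i Hi => H i ltac:(lia)) Hxy).
  assert (Ha := H (S k) ltac:(lia)). unfold ev. nra.
Qed.

Lemma seg_inc F s u v x y :
  (forall i, (u < i <= v)%nat -> 0 < alpha (F (s i))) ->
  seg F s u v x <= seg F s u v y -> x <= y.
Proof.
  intros H Hle. destruct (Rle_lt_dec x y) as [|Hlt]; [assumption|].
  exfalso. unfold seg in Hle.
  assert (segc F s u (v - u) y < segc F s u (v - u) x); [|lra].
  apply segc_strict; [|assumption]. intros i Hi. apply H. lia.
Qed.

Lemma comp_seg F s k x : comp F s k x = seg F s 0 k x.
Proof. unfold seg. rewrite Nat.sub_0_r. apply comp_segc. Qed.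

Lemma swap_decomp F s a k j t x : (1 <= k)%nat -> (1 <= j)%nat ->
  comp F (swap_blocks s (a + 1) (a + k) (a + k + j)) (a + k + j + t) x =
  segc F s (a + k + j) t (segc F s a k (segc F s (a + k) j (comp F s a x))).
Proof.
  intros Hk Hj. set (tau := swap_blocks s (a + 1) (a + k) (a + k + j)).
  rewrite !comp_segc.
  replace (a + k + j + t)%nat with (a + j + k + t)%nat by lia.
  rewrite segc_split. replace (0 + (a + j + k))%nat with (a + k + j)%nat by lia.
  replace (a + j + k)%nat with (a + j + k)%nat by lia.
  rewrite (segc_split F tau 0 (a + j) k).
  rewrite (segc_split F tau 0 a j). simpl.
  rewrite (segc_ext F tau s (a + k + j) (a + k + j) t).
  2:{ intros i Hi. unfold tau, swap_blocks.
      repeat match goal with |- context [Nat.ltb ?x ?y] => destruct (Nat.ltb_spec x y) end;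
      try lia; f_equal; lia. }
  f_equal.
  rewrite (segc_ext F tau s (a + j) a k).
  2:{ intros i Hi. unfold tau, swap_blocks.
      repeat match goal with |- context [Nat.ltb ?x ?y] => destruct (Nat.ltb_spec x y) end;
      try lia; f_equal; lia. }
  f_equal.
  rewrite (segc_ext F tau s a (a + k) j).
  2:{ intros i Hi. unfold tau, swap_blocks.
      repeat match goal with |- context [Nat.ltb ?x ?y] => destruct (Nat.ltb_spec x y) end;
      try lia; f_equal; lia. }
  f_equal.
  apply (segc_ext F tau s 0 0 a).
  intros i Hi. unfold tau, swap_blocks.
  repeat match goal with |- context [Nat.ltb ?x ?y] => destruct (Nat.ltb_spec x y) end;
  try lia; f_equal; lia.
Qed.

Lemma orig_decomp F s a k j t x :
  comp F s (a + k + j + t) x =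
  segc F s (a + k + j) t (segc F s (a + k) j (segc F s a k (comp F s a x))).
Proof.
  rewrite !comp_segc. rewrite !segc_split. reflexivity.
Qed.

Lemma LO_use n F s l m r : locally_optimal n F s ->
  (1 <= l)%nat -> (l <= m)%nat -> (m < r)%nat -> (r <= n)%nat ->
  seg F s r n (seg F s m r (seg F s (l-1) m (comp F s (l-1) 0))) <=
  seg F s r n (seg F s (l-1) m (seg F s m r (comp F s (l-1) 0))).
Proof.
  intros H H1 H2 H3 H4.
  specialize (H l m r H1 H2 H3 H4 0). unfold fsig in H.
  set (a := (l - 1)%nat) in *. set (k := (m - a)%nat). set (j := (r - m)%nat).
  set (t := (n - r)%nat).
  assert (El : l = (a + 1)%nat) by lia. assert (Em : m = (a + k)%nat) by lia.
  assert (Er : r = (a + k + j)%nat) by lia. assert (En : n = (a + k + j + t)%nat) by lia.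
  rewrite El, Em, Er, En in H.
  rewrite swap_decomp, orig_decomp in H by lia.
  unfold seg. rewrite Em, Er, En.
  replace (a + k + j + t - (a + k + j))%nat with t in * by lia.
  replace (a + k + j - (a + k))%nat with j by lia.
  replace (a + k - a)%nat with k by lia.
  exact H.
Qed.

Lemma perm_surj n s : is_perm n s -> forall i, (1 <= i <= n)%nat ->
  exists p, (1 <= p <= n)%nat /\ s p = i.
Proof.
  intros [Hr Hi] i Hin.
  assert (Hnd : NoDup (map s (seq 1 n))).
  { apply Injective_map_NoDup_in; [|apply seq_NoDup].
    intros x y Hx Hy. apply in_seq in Hx, Hy. apply Hi; lia. }
  assert (Hinc : incl (seq 1 n) (map s (seq 1 n))).
  { apply NoDup_length_incl; [assumption| rewrite length_map; lia |].
    intros y Hy. apply in_map_iff in Hy. destruct Hy as [x [<- Hx]].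
    apply in_seq in Hx. apply in_seq. specialize (Hr x ltac:(lia)). lia. }
  assert (In i (seq 1 n)) by (apply in_seq; lia).
  apply Hinc, in_map_iff in H. destruct H as [p [Hp Hp']]. apply in_seq in Hp'.
  exists p. split; [lia|assumption].
Qed.

Theorem mainTheorem18 (n : nat) (F : nat -> lin) (sigma : nat -> nat)
  (bmin : R) (q : nat) :
  (* nondecreasing *)
  (forall i, (1 <= i <= n)%nat -> 0 <= alpha (F i)) ->
  (* at least one constant *)
  (exists i, (1 <= i <= n)%nat /\ alpha (F i) = 0) ->
  (* bmin = min { beta f_i | alpha f_i = 0 } *)
  (exists i, (1 <= i <= n)%nat /\ alpha (F i) = 0 /\ beta (F i) = bmin) ->
  (forall i, (1 <= i <= n)%nat -> alpha (F i) = 0 -> bmin <= beta (F i)) ->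
  is_perm n sigma ->
  locally_optimal n F sigma ->
  (* q = max { q in [n] | alpha f_{sigma q} = 0 } *)
  (1 <= q <= n)%nat -> alpha (F (sigma q)) = 0 ->
  (forall j, (1 <= j <= n)%nat -> alpha (F (sigma j)) = 0 -> (j <= q)%nat) ->
  let c := fsig n F sigma 0 in
  c <= bmin /\
  F (sigma q) = (0, bmin) /\
  (forall i, (1 <= i <= q)%nat ->
     in_or_bot (theta (F (sigma i))) (cyc_interval (theta_c c - PI) (theta_c bmin))) /\
  (forall i, (q <= i <= n)%nat ->
     in_or_bot (theta (F (sigma i))) (interval (theta_c bmin) (theta_c c + PI))).
Proof.
  intros Hnd _ [i0 [Hi0 [Ha0 Hb0]]] Hmin Hperm Hlo Hq Haq Hmax c.
  pose proof Hperm as [Hrange Hinj].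
  assert (Hpos : forall i, (q < i <= n)%nat -> 0 < alpha (F (sigma i))).
  { intros i Hi. assert (0 <= alpha (F (sigma i))) by (apply Hnd, Hrange; lia).
    destruct (Req_dec (alpha (F (sigma i))) 0) as [E|E]; [|lra].
    specialize (Hmax i ltac:(lia) E). lia. }
  set (bq := beta (F (sigma q))).
  assert (Hbq : forall u y, (u < q)%nat -> seg F sigma u q y = bq).
  { intros u y Hu. rewrite (seg_kill F sigma u q q) by (lia || assumption).
    apply seg_nil. }
  assert (Hkq : forall y, seg F sigma (q - 1) q y = bq) by (intros; apply Hbq; lia).
  assert (Hcdef : c = seg F sigma q n bq).
  { unfold c, fsig. rewrite comp_seg, (seg_split F sigma 0 q n) by lia.
    rewrite Hbq by lia. reflexivity. }
  assert (Hc : forall u y, (u < q)%nat -> seg F sigma u n y = c).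
  { intros u y Hu. rewrite (seg_split F sigma u q n) by lia. rewrite Hbq by lia.
    symmetry; assumption. }
  assert (Hone : forall i y, (1 <= i)%nat -> seg F sigma (i - 1) i y = ev (F (sigma i)) y).
  { intros i y Hi. replace i with (S (i - 1)) at 2 3 by lia. apply seg_one. }
  assert (Hinc : forall u x y, (q <= u)%nat -> seg F sigma u n x <= seg F sigma u n y -> x <= y).
  { intros u x y Hu. apply seg_inc. intros; apply Hpos; lia. }
  assert (Hb : bq = bmin).
  { destruct (perm_surj n sigma Hperm i0 Hi0) as [p [Hp Hsp]].
    assert (Hap : alpha (F (sigma p)) = 0) by (rewrite Hsp; assumption).
    assert (Hpq := Hmax p Hp Hap).
    assert (bmin <= bq) by (apply Hmin; [apply Hrange; lia | assumption]).
    destruct (Nat.eq_dec p q) as [->|Hne].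
    { unfold bq. rewrite Hsp. assumption. }
    pose proof (LO_use n F sigma p p q Hlo ltac:(lia) ltac:(lia) ltac:(lia) ltac:(lia)) as HL.
    assert (Hkp : forall y, seg F sigma (p - 1) p y = bmin).
    { intros y. rewrite (seg_kill F sigma (p-1) p p) by (lia || assumption).
      rewrite seg_nil, Hsp. assumption. }
    rewrite !Hkp, !(Hbq p) in HL by lia.
    apply Hinc in HL; [lra|lia]. }
  assert (Hi : c <= bmin).
  { rewrite <- Hb. destruct (Nat.eq_dec q n) as [->|Hne].
    { rewrite Hcdef, seg_nil. lra. }
    pose proof (LO_use n F sigma q q n Hlo ltac:(lia) ltac:(lia) ltac:(lia) ltac:(lia)) as HL.
    rewrite !seg_nil, !Hkq in HL. rewrite Hcdef. exact HL. }
  assert (HFq : F (sigma q) = (0, bmin)).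
  { unfold bq, alpha, beta in *. destruct (F (sigma q)) as [a b]. simpl in *.
    subst. reflexivity. }
  split; [exact Hi|]. split; [exact HFq|]. split.
  -
    intros i Hi1.
    assert (Hcond : c <= ev (F (sigma i)) c /\ bmin <= ev (F (sigma i)) bmin).
    { destruct (Nat.eq_dec i q) as [->|Hne].
      { rewrite HFq. unfold ev, alpha, beta. simpl. lra. }
      split.
      - pose proof (LO_use n F sigma i i n Hlo ltac:(lia) ltac:(lia) ltac:(lia) ltac:(lia)) as HL.
        rewrite !seg_nil, !(Hc i) in HL by lia. rewrite Hone in HL by lia. exact HL.
      - pose proof (LO_use n F sigma i i q Hlo ltac:(lia) ltac:(lia) ltac:(lia) ltac:(lia)) as HL.
        rewrite !(Hbq i) in HL by lia. rewrite Hone in HL by lia.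
        apply Hinc in HL; [|lia]. rewrite <- Hb. exact HL. }
    unfold ev in Hcond. unfold theta.
    destruct (Req_EM_T (beta (F (sigma i))) 0) as [E1|E1];
      [destruct (Req_EM_T (1 - alpha (F (sigma i))) 0) as [E2|E2]|]; simpl; try exact I;
      apply ang_iii; lra.
  -
    intros i Hi1.
    assert (Hcond : ev (F (sigma i)) c <= c \/ ev (F (sigma i)) bmin <= bmin).
    { destruct (Nat.eq_dec i q) as [->|Hne].
      { right. rewrite HFq. unfold ev, alpha, beta. simpl. lra. }
      set (x := seg F sigma q (i - 1) bq).
      assert (Hx : forall y, seg F sigma (q - 1) (i - 1) y = x).
      { intros y. rewrite (seg_split F sigma (q-1) q (i-1)) by lia. rewrite Hkq. reflexivity. }
      assert (Hxb : x <= bq).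
      { destruct (Nat.eq_dec (i - 1) q) as [E|E].
        { unfold x. rewrite E, seg_nil. lra. }
        pose proof (LO_use n F sigma q q (i-1) Hlo ltac:(lia) ltac:(lia) ltac:(lia) ltac:(lia)) as HL.
        rewrite !Hkq in HL. apply Hinc in HL; [exact HL|lia]. }
      assert (Hcx : c <= x).
      { pose proof (LO_use n F sigma q (i-1) n Hlo ltac:(lia) ltac:(lia) ltac:(lia) ltac:(lia)) as HL.
        rewrite !seg_nil, !Hx in HL.
        rewrite Hcdef, (seg_split F sigma q (i-1) n) by lia. exact HL. }
      assert (Hfx : ev (F (sigma i)) x <= x).
      { pose proof (LO_use n F sigma q (i-1) i Hlo ltac:(lia) ltac:(lia) ltac:(lia) ltac:(lia)) as HL.
        rewrite !Hx in HL. rewrite Hone in HL by lia.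
        apply Hinc in HL; [exact HL|lia]. }
      unfold ev in *. rewrite Hb in Hxb.
      destruct (Rle_dec 1 (alpha (F (sigma i)))).
      - left. nra.
      - right. nra. }
    unfold ev in Hcond. unfold theta.
    destruct (Req_EM_T (beta (F (sigma i))) 0) as [E1|E1];
      [destruct (Req_EM_T (1 - alpha (F (sigma i))) 0) as [E2|E2]|]; simpl; try exact I;
      apply ang_iv; lra.
Qed.
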